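(* Let $A,M\in\mathbb{R}^{n\times n}$ with $M$ nonsingular, $B\in\mathbb{R}^{n\times r}$, and shifts $\alpha_1,\ldots,\alpha_j\in\mathbb{C}$ with $\mathrm{Re}(\alpha_i)<0$. Run $j$ steps of the inexact LR-ADI iteration described in the context, producing $v_i,s_i,w_i$ and $Z_j$. Then $$AZ_j=MZ_jT_j+w_jg_j^*-S_j\Gamma_j,\qquad S_j:=[s_1,\ldots,s_j],$$ where $T_j=\tilde T_j\otimes I_r$ with $\tilde T_j\in\mathbb{C}^{j\times j}$ lower triangular, $(\tilde T_j)_{ii}=\overline{\alpha_i}$, $(\tilde T_j)_{ik}=-\gamma_i\gamma_k$ for $i>k$; $g_j:=[\gamma_1,\ldots,\gamma_j]^T\otimes I_r$; and $\Gamma_j:=\mathrm{diag}(\gamma_1,\ldots,\gamma_j)\otimes I_r$. Moreover, $$AZ_jZ_j^*M^*+MZ_jZ_j^*A^*+BB^*=-S_j\Gamma_jZ_j^*M^*-MZ_j\Gamma_jS_j^*+w_jw_j^*.$$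
   Context: Inexact LR-ADI iteration: $w_0:=B$, $\gamma_i:=\sqrt{-2\,\mathrm{Re}(\alpha_i)}$; for $i=1,\ldots,j$, $v_i\in\mathbb{C}^{n\times r}$ is an arbitrary (approximate) solution of $(A+\alpha_iM)v=w_{i-1}$ with residual $s_i:=w_{i-1}-(A+\alpha_iM)v_i$, and $w_i:=w_{i-1}+\gamma_i^2Mv_i$; $Z_j:=[\gamma_1v_1,\ldots,\gamma_jv_j]\in\mathbb{C}^{n\times jr}$. $^*$ is conjugate transpose, $\overline{\alpha}$ complex conjugate, $\otimes$ the Kronecker product. *)

(* Defs.v *)
From HB Require Import structures.
From mathcomp Require Import all_boot all_order all_algebra.
From mathcomp Require Export mxtens.
Set Implicit Arguments. Unset Strict Implicit. Unset Printing Implicit Defensive.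
Import Order.TTheory GRing.Theory Num.Theory.
Local Open Scope ring_scope.

(* Complex numbers: an arbitrary numClosedFieldType C (e.g. algC, or R[i]). *)
(* Indices are 0-based: alpha k, v k, s k denote the paper's
   alpha_{k+1}, v_{k+1}, s_{k+1}; w k denotes the paper's w_k. *)

Definition ctmx (C : numClosedFieldType) m n (X : 'M[C]_(m, n)) : 'M[C]_(n, m) :=
  map_mx (fun x => x^*) X^T.

Definition gam (C : numClosedFieldType) (alpha : nat -> C) (k : nat) : C :=
  sqrtC (- 2 * 'Re (alpha k)).

Section LRADI.
Variables (C : numClosedFieldType) (n r : nat).
Variables (A M : 'M[C]_n) (B : 'M[C]_(n, r)) (alpha : nat -> C)
          (v : nat -> 'M[C]_(n, r)).

Fixpoint adi_w (k : nat) : 'M[C]_(n, r) :=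
  match k with
  | 0 => B
  | k'.+1 => adi_w k' + (gam alpha k' ^+ 2) *: (M *m v k')
  end.

Definition adi_s (k : nat) : 'M[C]_(n, r) :=
  adi_w k - (A + alpha k *: M) *m v k.

(* block row [X_1, ..., X_j] = \sum_i e_i^T (x) X_i *)
Definition blockrow (j : nat) (X : nat -> 'M[C]_(n, r)) : 'M[C]_(n, j * r) :=
  \sum_(i < j) castmx (mul1n n, erefl (j * r)) ((delta_mx 0 i : 'rV[C]_j) *t X i).

Definition adi_Z (j : nat) : 'M[C]_(n, j * r) :=
  blockrow j (fun k => gam alpha k *: v k).

Definition adi_S (j : nat) : 'M[C]_(n, j * r) := blockrow j adi_s.

End LRADI.

Section Small.
Variables (C : numClosedFieldType) (alpha : nat -> C) (j r : nat).

Definition Ttilde : 'M[C]_j :=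
  \matrix_(i < j, k < j)
    if i == k then (alpha i)^* else
    if (k < i)%N then - (gam alpha i * gam alpha k) else 0.

Definition adi_T : 'M[C]_(j * r) := Ttilde *t (1%:M : 'M[C]_r).

Definition adi_g : 'M[C]_(j * r, r) :=
  castmx (erefl (j * r), mul1n r)
    ((\col_(i < j) gam alpha i : 'cV[C]_j) *t (1%:M : 'M[C]_r)).

Definition adi_Gamma : 'M[C]_(j * r) :=
  diag_mx (\row_(i < j) gam alpha i) *t (1%:M : 'M[C]_r).
End Small.

(* Main.v *)
Require Import Defs.
From HB Require Import structures.
From mathcomp Require Import all_boot all_order all_algebra.
From mathcomp Require Import ring.
Import Order.TTheory GRing.Theory Num.Theory.
Local Open Scope ring_scope.

Section H.
Variable C : numClosedFieldType.

Lemma ctmxE m n (X : 'M[C]_(m,n)) i k : ctmx X i k = (X k i)^*.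
Proof. by rewrite /ctmx !mxE. Qed.

Lemma ctmx_mul m n p (X : 'M[C]_(m,n)) (Y : 'M[C]_(n,p)) :
  ctmx (X *m Y) = ctmx Y *m ctmx X.
Proof.
apply/matrixP=> i k; rewrite ctmxE !mxE rmorph_sum; apply: eq_bigr => l _.
by rewrite !ctmxE rmorphM mulrC.
Qed.

Lemma ctmxD m n (X Y : 'M[C]_(m,n)) : ctmx (X + Y) = ctmx X + ctmx Y.
Proof. by apply/matrixP=> i k; rewrite !(ctmxE, mxE) rmorphD. Qed.

Lemma ctmxN m n (X : 'M[C]_(m,n)) : ctmx (- X) = - ctmx X.
Proof. by apply/matrixP=> i k; rewrite !(ctmxE, mxE) rmorphN. Qed.

Lemma ctmxB m n (X Y : 'M[C]_(m,n)) : ctmx (X - Y) = ctmx X - ctmx Y.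
Proof. by rewrite ctmxD ctmxN. Qed.

Lemma ctmxK m n (X : 'M[C]_(m,n)) : ctmx (ctmx X) = X.
Proof. by apply/matrixP=> i k; rewrite !ctmxE conjCK. Qed.

Lemma sum_tens j r (F : 'I_(j * r) -> C) :
  \sum_(b < j * r) F b = \sum_(k < j) \sum_(c < r) F (mxtens_index (k, c)).
Proof.
rewrite pair_big /=; apply: reindex.
by exists (@mxtens_unindex j r)=> b _; rewrite (mxtens_indexK, mxtens_unindexK) //; case: b.
Qed.

Lemma blockrowE n r j (X : nat -> 'M[C]_(n, r)) a (k : 'I_j) c :
  blockrow j X a (mxtens_index (k, c)) = X k a c.
Proof.
rewrite /blockrow summxE (bigD1 k) //= big1 ?addr0.
  rewrite castmxE /=.
  have -> : cast_ord (esym (mul1n n)) a = mxtens_index (ord0, a) by apply: val_inj.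
  by rewrite cast_ord_id tensmxE mxE !eqxx mul1r.
move=> i /negbTE ik; rewrite castmxE /=.
have -> : cast_ord (esym (mul1n n)) a = mxtens_index (ord0, a) by apply: val_inj.
by rewrite cast_ord_id tensmxE mxE [k == i]eq_sym ik andbF mul0r.
Qed.

Lemma mul_blockrow n m r j (N : 'M[C]_(m, n)) (X : nat -> 'M[C]_(n, r)) :
  N *m blockrow j X = blockrow j (fun k => N *m X k).
Proof.
apply/matrixP=> a b; case: (mxtens_indexP b)=> k c.
rewrite blockrowE !mxE; apply: eq_bigr=> l _; by rewrite blockrowE.
Qed.

Lemma sum_delta r (F : 'I_r -> C) (c : 'I_r) :
  \sum_(c' < r) F c' * (c' == c)%:R = F c.
Proof.
rewrite (bigD1 c) //= eqxx mulr1 big1 ?addr0 // => i /negbTE ->; by rewrite mulr0.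
Qed.

Lemma sum_delta' r (F : 'I_r -> C) (c : 'I_r) :
  \sum_(c' < r) F c' * (c == c')%:R = F c.
Proof.
rewrite -[RHS](@sum_delta r F); apply: eq_bigr=> i _; by rewrite eq_sym.
Qed.

Lemma blockrow_tens n r j (X : nat -> 'M[C]_(n, r)) (P : 'M[C]_j) a k c :
  (blockrow j X *m (P *t (1%:M : 'M[C]_r))) a (mxtens_index (k, c)) =
  \sum_(i < j) P i k * X i a c.
Proof.
rewrite mxE sum_tens; apply: eq_bigr=> i _.
under eq_bigr do rewrite blockrowE tensmxE mxE mulrCA.
by rewrite -mulr_sumr ?sum_delta ?sum_delta' mulrC.
Qed.

Lemma blockrow_g n r j (X : nat -> 'M[C]_(n, r)) alpha a c :
  (blockrow j X *m adi_g alpha j r) a c = \sum_(i < j) gam alpha i * X i a c.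
Proof.
rewrite mxE sum_tens; apply: eq_bigr=> i _.
under eq_bigr => c' do rewrite blockrowE /adi_g castmxE /=.
have -> : cast_ord (esym (mul1n r)) c = mxtens_index (ord0, c) by apply: val_inj.
under eq_bigr do rewrite cast_ord_id tensmxE !mxE mulrCA.
by rewrite -mulr_sumr ?sum_delta ?sum_delta' mulrC.
Qed.

Lemma mul_ctg n r j (Y : 'M[C]_(n, r)) alpha a (k : 'I_j) c :
  (Y *m ctmx (adi_g alpha j r)) a (mxtens_index (k, c)) = (gam alpha k)^* * Y a c.
Proof.
rewrite mxE.
under eq_bigr => c' do rewrite ctmxE /adi_g castmxE /=.
have E : forall c' : 'I_r, cast_ord (esym (mul1n r)) c' = mxtens_index (ord0, c') by move=> c'; apply: val_inj.
under eq_bigr => c' do rewrite E cast_ord_id tensmxE !mxE rmorphM /= rmorph_nat mulrCA.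
by rewrite -mulr_sumr ?sum_delta ?sum_delta' mulrC.
Qed.

Lemma blockrow_Gamma n r j (X : nat -> 'M[C]_(n, r)) alpha a (k : 'I_j) c :
  (blockrow j X *m adi_Gamma alpha j r) a (mxtens_index (k, c)) =
  gam alpha k * X k a c.
Proof.
rewrite blockrow_tens (bigD1 k) //= big1 ?addr0; first by rewrite !mxE eqxx mulr1n.
by move=> i /negbTE ik; rewrite !mxE ik mulr0n mul0r.
Qed.

Lemma mxDE m n (X Y : 'M[C]_(m,n)) a b : (X + Y) a b = X a b + Y a b.
Proof. by rewrite mxE. Qed.
Lemma mxNE m n (X : 'M[C]_(m,n)) a b : (- X) a b = - X a b.
Proof. by rewrite mxE. Qed.
Lemma mxBE m n (X Y : 'M[C]_(m,n)) a b : (X - Y) a b = X a b - Y a b.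
Proof. by rewrite mxE mxNE. Qed.
Lemma mxZE m n (x : C) (X : 'M[C]_(m,n)) a b : (x *: X) a b = x * X a b.
Proof. by rewrite mxE. Qed.

Lemma adi_w_split n r (M : 'M[C]_n) B alpha v k j : (k <= j)%N ->
  adi_w M B alpha v j = adi_w M B alpha v k +
    \sum_(i < j | (k <= i)%N) (gam alpha i ^+ 2) *: (M *m v i) :> 'M[C]_(n, r).
Proof.
elim: j => [|j IH]; first by rewrite leqn0 => /eqP ->; rewrite big_ord0 addr0.
rewrite leq_eqVlt => /orP [/eqP ->|]. 
  by rewrite big1 ?addr0 // => i; rewrite leqNgt ltn_ord.
rewrite ltnS => kj /=; rewrite (IH kj) [in RHS]big_mkcond big_ord_recr /= -big_mkcond.
by rewrite kj addrA.
Qed.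

Lemma gam_conj (alpha : nat -> C) k : 'Re (alpha k) < 0 -> (gam alpha k)^* = gam alpha k.
Proof.
move=> h; apply: geC0_conj; rewrite sqrtC_ge0 mulNr -mulrN.
by apply: mulr_ge0; [rewrite ler0n | rewrite oppr_ge0 ltW].
Qed.

Lemma gam_sq (alpha : nat -> C) k : gam alpha k ^+ 2 = - (alpha k + (alpha k)^*).
Proof.
by rewrite /gam sqrtCK ReE mulNr mulrCA mulfV ?mulr1 // pnatr_eq0.
Qed.

Lemma ctmx_Gamma (alpha : nat -> C) j r :
  (forall k, (k < j)%N -> 'Re (alpha k) < 0) ->
  ctmx (adi_Gamma alpha j r) = adi_Gamma alpha j r.
Proof.
move=> h; apply/matrixP=> b b'.
case: (mxtens_indexP b)=> i c; case: (mxtens_indexP b')=> k c'.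
rewrite ctmxE /adi_Gamma !tensmxE !mxE rmorphM /= rmorph_nat.
rewrite [k == i]eq_sym [c' == c]eq_sym.
case: eqP => [-> | _]; last by rewrite !mulr0n !rmorph0.
rewrite /= !mulr1n gam_conj //; exact: h.
Qed.

Lemma T_ct (alpha : nat -> C) j r :
  (forall k, (k < j)%N -> 'Re (alpha k) < 0) ->
  adi_T alpha j r + ctmx (adi_T alpha j r) =
  - (adi_g alpha j r *m ctmx (adi_g alpha j r)).
Proof.
move=> h; apply/matrixP=> b b'.
case: (mxtens_indexP b)=> i c; case: (mxtens_indexP b')=> k c'.
rewrite mxDE mxNE ctmxE /adi_T !tensmxE mul_ctg.
rewrite /adi_g castmxE /=.
have -> : cast_ord (esym (mul1n r)) c' = mxtens_index (ord0, c') by apply: val_inj.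
rewrite cast_ord_id tensmxE !mxE rmorphM /= rmorph_nat [c' == c]eq_sym.
have hi := @gam_conj alpha _ (h i (ltn_ord i)); have hk := @gam_conj alpha _ (h k (ltn_ord k)).
case: (c =P c') => [_|_] /=; last by rewrite !mulr0 oppr0 addr0.
rewrite !mulr1 hk.
case: (eqVneq i k) => [<-|ik].
  by rewrite conjCK -expr2 gam_sq opprK addrC.
case: (ltngtP k i) => ki.
- by rewrite rmorph0 addr0 mulrC.
- by rewrite rmorphN rmorphM /= hi hk add0r.
- by move: ik; rewrite (val_inj ki) eqxx.
Qed.

Lemma MZg n r j (M : 'M[C]_n) (B : 'M[C]_(n, r)) alpha v :
  M *m adi_Z alpha v j *m adi_g alpha j r = adi_w M B alpha v j - B.
Proof.
rewrite (@adi_w_split n r M B alpha v 0 j) // /= addrC addKr.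
rewrite /adi_Z mul_blockrow; apply/matrixP=> a c.
rewrite blockrow_g summxE; apply: eq_bigr => i _.
by rewrite -scalemxAr !mxZE mulrA -expr2.
Qed.
End H.

Theorem theorem3p2 (C : numClosedFieldType) (n r j : nat)
  (A M : 'M[C]_n) (B : 'M[C]_(n, r)) (alpha : nat -> C)
  (v : nat -> 'M[C]_(n, r)) :
  A \is a mxOver Num.real -> M \is a mxOver Num.real ->
  B \is a mxOver Num.real -> M \in unitmx ->
  (forall k, (k < j)%N -> 'Re (alpha k) < 0) ->
  let Z := adi_Z alpha v j in
  let S := adi_S A M B alpha v j in
  let w := adi_w M B alpha v j in
  let Gm := adi_Gamma alpha j r in
  A *m Z = M *m Z *m adi_T alpha j r + w *m ctmx (adi_g alpha j r) - S *m Gm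
  /\
  A *m Z *m ctmx Z *m ctmx M + M *m Z *m ctmx Z *m ctmx A + B *m ctmx B
  = - (S *m Gm *m ctmx Z *m ctmx M) - M *m Z *m Gm *m ctmx S + w *m ctmx w.
Proof.
move=> _ _ _ _ h Z S w Gm.
have E1 : A *m Z = M *m Z *m adi_T alpha j r + w *m ctmx (adi_g alpha j r) - S *m Gm.
  apply/matrixP=> a b; case: (mxtens_indexP b)=> k c.
  rewrite mxBE mxDE /Z /adi_Z !mul_blockrow blockrowE /adi_T blockrow_tens.
  rewrite mul_ctg /S /adi_S /Gm blockrow_Gamma /=.
  rewrite /w (@adi_w_split C n r M B alpha v k j) ?(ltnW (ltn_ord k)) //.
  rewrite /adi_s mulmxDl -!scalemxAr -scalemxAl.
  rewrite !(mxBE, mxDE, mxZE, summxE).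
  under eq_bigr do rewrite -scalemxAr mxZE.
  under [X in _ * (_ + X)]eq_bigr => i _ do rewrite mxZE.
  have hT : \sum_(i < j) Ttilde alpha j i k * (gam alpha i * (M *m v i) a c)
      = (alpha k)^* * (gam alpha k * (M *m v k) a c) - gam alpha k * \sum_(i < j | (k < i)%N) (gam alpha i ^+ 2 * (M *m v i) a c).
    rewrite (bigD1 k) //= mxE eqxx; congr (_ + _).
    rewrite mulr_sumr -sumrN big_mkcond [RHS]big_mkcond; apply: eq_bigr => i _ /=.
    rewrite mxE; case: (eqVneq i k) => [-> | ik] /=; first by rewrite ltnn.
    by case: ifP => _; [ring | rewrite !mul0r].
  have hW : \sum_(i < j | (k <= i)%N) gam alpha i ^+ 2 * (M *m v i) a c
      = gam alpha k ^+ 2 * (M *m v k) a c + \sum_(i < j | (k < i)%N) (gam alpha i ^+ 2 * (M *m v i) a c).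
    rewrite (bigD1 k) //=; congr (_ + _); apply: eq_bigl => i.
    by rewrite ltn_neqAle eq_sym andbC -val_eqE.
  rewrite hT hW (@gam_conj C alpha _ (h k (ltn_ord k))).
  set s1 := \sum_(i < j | _) _.
  set xa := (A *m v k) a c.
  set wk := adi_w M B alpha v k a c.
  rewrite gam_sq; ring.
split => //.
have cT : ctmx (adi_T alpha j r) = - (adi_g alpha j r *m ctmx (adi_g alpha j r)) - adi_T alpha j r.
  by rewrite -(@T_ct C alpha j r h) [adi_T _ _ _ + _]addrC addrK.
have cG : ctmx Gm = Gm by apply: ctmx_Gamma.
have e1 : A *m Z *m ctmx Z *m ctmx M = (A *m Z) *m ctmx (M *m Z) by rewrite ctmx_mul mulmxA.
have e2 : M *m Z *m ctmx Z *m ctmx A = (M *m Z) *m ctmx (A *m Z) by rewrite ctmx_mul !mulmxA.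
have e3 : S *m Gm *m ctmx Z *m ctmx M = S *m Gm *m ctmx (M *m Z) by rewrite ctmx_mul mulmxA.
have gK : ctmx (adi_g alpha j r) *m (ctmx Z *m ctmx M) = ctmx w - ctmx B.
  by rewrite -!ctmx_mul (@MZg C n r j M B) ctmxB.
rewrite e1 e2 e3 E1 !(ctmxB, ctmxD, ctmx_mul) cT ctmxK cG.
rewrite !(mulmxDl, mulmxBl, mulmxDr, mulmxBr, mulNmx, mulmxN) !mulmxA (@MZg C n r j M B).
rewrite -!mulmxA gK.
rewrite !(mulmxDl, mulmxBl, mulmxDr, mulmxBr, mulNmx, mulmxN).
apply/matrixP => a b; rewrite !(mxDE, mxBE, mxNE).
ring.
Qed.
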